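(* Let $d\ge2$ be an integer and $g(b,x):=b^d\big(\frac{1+x+x^2}{1+b+bx}\big)^d$ for $0\le b,x\le1$. For $b\in(0,1]$, the map $x\mapsto g(b,x)$ is increasing and convex on $(0,1]$ and has a unique fixed point $c_0=c_0(b)$ in $(0,1)$. Moreover, writing $g_b(x)=g(b,x)$, for every fixed $b\in(0,1]$ and every $0\le c<1$ the iterates $g_b^{(i)}(c)$ converge to $c_0(b)$ as $i\to\infty$. Also, $g_b(x)>x$ if and only if $x<c_0(b)$. *)

(* Defs.v *)
From Stdlib Require Import Reals Lra Lia.
Open Scope R_scope.

Definition g (d : nat) (b x : R) : R :=
  b ^ d * ((1 + x + x ^ 2) / (1 + b + b * x)) ^ d.

Definition strictly_increasing_on_0_1 (f : R -> R) : Prop :=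
  forall x y, 0 < x -> x < y -> y <= 1 -> f x < f y.

Definition convex_on_0_1 (f : R -> R) : Prop :=
  forall x y t, 0 < x <= 1 -> 0 < y <= 1 -> 0 <= t <= 1 ->
    f (t * x + (1 - t) * y) <= t * f x + (1 - t) * f y.

(* Main.v *)
Require Import Defs.
From Stdlib Require Import Reals.
From Stdlib Require Import Lra Lia Ranalysis5.
Open Scope R_scope.

Definition hh (b x : R) := b * (1 + x + x ^ 2) / (1 + b + b * x).

Lemma g_hh d b x : 0 < b -> 0 <= x -> g d b x = (hh b x) ^ d.
Proof.
  intros Hb Hx. unfold g, hh. rewrite <- Rpow_mult_distr. f_equal.
  field. nra.
Qed.

Lemma hh_pos b x : 0 < b -> 0 <= x -> 0 < hh b x.
Proof.
  intros. unfold hh. apply Rdiv_lt_0_compat; nra.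
Qed.

Lemma hh_lt b x y : 0 < b -> 0 <= x -> x < y -> hh b x < hh b y.
Proof.
  intros Hb Hx Hxy. unfold hh.
  apply Rlt_0_minus.
  replace (b * (1 + y + y ^ 2) / (1 + b + b * y) - b * (1 + x + x ^ 2) / (1 + b + b * x))
    with (b * (y - x) * (1 + (1+b)*(x+y) + b*x*y) / ((1 + b + b * y) * (1 + b + b * x)))
    by (field; split; nra).
  apply Rdiv_lt_0_compat.
  - assert (0 <= b * x * y) by (apply Rmult_le_pos; [apply Rmult_le_pos|]; lra).
    assert (0 <= (1+b)*(x+y)) by (apply Rmult_le_pos; lra).
    apply Rmult_lt_0_compat; [nra|]. lra.
  - apply Rmult_lt_0_compat; nra.
Qed.

Lemma pow_strict x y n : 0 <= x < y -> (1 <= n)%nat -> x ^ n < y ^ n.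
Proof.
  intros H Hn. induction n as [|n IH]; [lia|].
  destruct n. simpl. lra.
  assert (IH' : x ^ S n < y ^ S n) by (apply IH; lia).
  change (x * x ^ S n < y * y ^ S n).
  pose proof (pow_le x (S n) (proj1 H)). nra.
Qed.

Lemma inv_convex u v t : 0 < u -> 0 < v -> 0 <= t <= 1 ->
  1 / (t * u + (1 - t) * v) <= t * (1 / u) + (1 - t) * (1 / v).
Proof.
  intros Hu Hv Ht.
  assert (Hw : 0 < t * u + (1 - t) * v) by nra.
  replace (t * (1 / u) + (1 - t) * (1 / v)) with ((t * v + (1 - t) * u) / (u * v))
    by (field; lra).
  apply Rmult_le_reg_r with ((t * u + (1 - t) * v) * (u * v)).
  apply Rmult_lt_0_compat; nra.
  replace (1 / (t * u + (1 - t) * v) * ((t * u + (1 - t) * v) * (u * v))) with (u * v)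
    by (field; lra).
  replace ((t * v + (1 - t) * u) / (u * v) * ((t * u + (1 - t) * v) * (u * v)))
    with ((t * v + (1 - t) * u) * (t * u + (1 - t) * v)) by (field; lra).
  assert (0 <= t * (1 - t) * ((u - v) * (u - v))) by (apply Rmult_le_pos; [apply Rmult_le_pos; lra| apply Rle_0_sqr]).
  nra.
Qed.

Lemma hh_decomp b x : 0 < b -> 0 <= x ->
  hh b x = x - 1 / b + ((b*b+b+1)/b) * (1 / (1 + b + b * x)).
Proof. intros. unfold hh. field. split; nra. Qed.

Lemma hh_convex b x y t : 0 < b -> 0 <= x -> 0 <= y -> 0 <= t <= 1 ->
  hh b (t * x + (1 - t) * y) <= t * hh b x + (1 - t) * hh b y.
Proof.
  intros Hb Hx Hy Ht.
  assert (Hz : 0 <= t * x + (1 - t) * y) by nra.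
  rewrite !hh_decomp; auto.
  replace (1 + b + b * (t * x + (1 - t) * y)) with
    (t * (1 + b + b * x) + (1 - t) * (1 + b + b * y)) by ring.
  assert (HK : 0 < (b*b+b+1)/b) by (apply Rdiv_lt_0_compat; nra).
  pose proof (inv_convex (1 + b + b * x) (1 + b + b * y) t ltac:(nra) ltac:(nra) Ht).
  set (A := 1 / (t * (1 + b + b * x) + (1 - t) * (1 + b + b * y))) in *.
  set (B := 1 / (1 + b + b * x)) in *. set (C := 1 / (1 + b + b * y)) in *.
  set (K := (b*b+b+1)/b) in *. nra.
Qed.

Lemma pow_convex a c t n : 0 <= a -> 0 <= c -> 0 <= t <= 1 ->
  (t * a + (1 - t) * c) ^ n <= t * a ^ n + (1 - t) * c ^ n.
Proof.
  intros Ha Hc Ht. induction n as [|n IH]. simpl. lra.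
  simpl.
  assert (Hm : 0 <= (a - c) * (a ^ n - c ^ n)).
  { destruct (Rle_dec a c).
    - assert (a ^ n <= c ^ n) by (apply pow_incr; lra). nra.
    - assert (c ^ n <= a ^ n) by (apply pow_incr; lra). nra. }
  assert (0 <= t * a + (1 - t) * c) by nra.
  apply Rle_trans with ((t * a + (1 - t) * c) * (t * a ^ n + (1 - t) * c ^ n)).
  apply Rmult_le_compat_l; auto.
  assert (Htt : 0 <= t * (1 - t)) by nra.
  assert (E : t * (a * a ^ n) + (1 - t) * (c * c ^ n) -
     (t * a + (1 - t) * c) * (t * a ^ n + (1 - t) * c ^ n) = t * (1 - t) * ((a - c) * (a ^ n - c ^ n))) by ring.
  nra.
Qed.

Lemma g_convex d b x y t : 0 < b -> 0 <= x -> 0 <= y -> 0 <= t <= 1 ->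
  g d b (t * x + (1 - t) * y) <= t * g d b x + (1 - t) * g d b y.
Proof.
  intros Hb Hx Hy Ht.
  assert (Hz : 0 <= t * x + (1 - t) * y) by nra.
  rewrite !g_hh; auto.
  apply Rle_trans with ((t * hh b x + (1 - t) * hh b y) ^ d).
  apply pow_incr. split. left; apply hh_pos; auto. apply hh_convex; auto.
  apply pow_convex; auto; left; apply hh_pos; auto.
Qed.

Lemma g_lt d b x y : (1 <= d)%nat -> 0 < b -> 0 <= x -> x < y -> g d b x < g d b y.
Proof.
  intros. rewrite !g_hh; try lra. apply pow_strict; auto.
  split. left; apply hh_pos; auto. apply hh_lt; auto.
Qed.

Lemma g_le d b x y : (1 <= d)%nat -> 0 < b -> 0 <= x -> x <= y -> g d b x <= g d b y.
Proof.
  intros. destruct (Req_dec x y). subst; lra. left; apply g_lt; auto; lra.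
Qed.

Lemma g_cont d b a : 0 < b -> 0 <= a -> continuity_pt (g d b) a.
Proof. intros. unfold g. reg. nra. Qed.

Lemma g0 d b : 0 < b -> 0 < g d b 0.
Proof. intros. rewrite g_hh; try lra. apply pow_lt, hh_pos; lra. Qed.

Lemma g1 d b : 0 < b <= 1 -> g d b 1 <= 1.
Proof.
  intros. rewrite g_hh; try lra.
  assert (0 < hh b 1) by (apply hh_pos; lra).
  assert (hh b 1 <= 1).
  { unfold hh. apply Rmult_le_reg_r with (1 + b + b * 1). lra.
    unfold Rdiv. rewrite Rmult_assoc, Rinv_l by lra. lra. }
  rewrite <- (pow1 d) at 2. apply pow_incr. lra.
Qed.

Lemma gp d b : (2 <= d)%nat -> 0 < b <= 1 -> g d b (9/10) < 9/10.
Proof.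
  intros Hd Hb. rewrite g_hh; try lra.
  assert (H1 : 0 < hh b (9/10)) by (apply hh_pos; lra).
  assert (H2 : hh b (9/10) <= 271/290).
  { unfold hh. apply Rmult_le_reg_r with (1 + b + b * (9/10)). lra.
    unfold Rdiv. rewrite Rmult_assoc, Rinv_l by lra. nra. }
  apply Rle_lt_trans with (hh b (9/10) ^ 2).
  - replace d with (2 + (d - 2))%nat by lia. rewrite pow_add.
    assert (0 <= hh b (9 / 10) ^ (d - 2) <= 1).
    { split. apply pow_le; lra. rewrite <- (pow1 (d-2)). apply pow_incr. lra. }
    assert (0 <= hh b (9/10) ^ 2) by (apply pow_le; lra). nra.
  - simpl. nra.
Qed.

Section Main.
Variables (d : nat) (hd : (2 <= d)%nat) (b : R) (hb : 0 < b <= 1).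

Let phi x := g d b x - x.

Lemma phi_convex x y t : 0 <= x -> 0 <= y -> 0 <= t <= 1 ->
  phi (t * x + (1 - t) * y) <= t * phi x + (1 - t) * phi y.
Proof.
  intros. unfold phi. pose proof (g_convex d b x y t ltac:(lra) H H0 H1). lra.
Qed.

Lemma exists_c0 : {c0 : R | 0 <= c0 <= 9/10 /\ phi c0 = 0}.
Proof.
  destruct (IVT_interv (fun x => - phi x) 0 (9/10)) as [z [Hz1 Hz2]].
  - intros a Ha. unfold phi. reg. apply g_cont; lra.
  - lra.
  - unfold phi. pose proof (g0 d b ltac:(lra)). lra.
  - unfold phi. pose proof (gp d b hd hb). lra.
  - exists z. split; auto. lra.
Qed.

Variable c0 : R.
Hypothesis Hc0 : 0 <= c0 <= 9/10 /\ phi c0 = 0.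

Lemma c0_pos : 0 < c0.
Proof.
  destruct Hc0 as [[H1 H2] H3]. destruct (Req_dec c0 0); [|lra].
  subst. unfold phi in H3. pose proof (g0 d b ltac:(lra)). lra.
Qed.

Lemma c0_lt : c0 < 9/10.
Proof.
  destruct Hc0 as [[H1 H2] H3]. destruct (Req_dec c0 (9/10)); [|lra].
  subst. unfold phi in H3. pose proof (gp d b hd hb). lra.
Qed.

Lemma phi_p : phi (9/10) < 0.
Proof. unfold phi. pose proof (gp d b hd hb). lra. Qed.

Lemma phi_1 : phi 1 <= 0.
Proof. unfold phi. pose proof (g1 d b hb). lra. Qed.

Lemma phi_below x : 0 <= x < c0 -> 0 < phi x.
Proof.
  intros Hx. pose proof c0_lt as Hl. destruct Hc0 as [_ H0].
  set (p := 9/10) in *.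
  set (t := (p - c0) / (p - x)).
  assert (Ht : 0 < t < 1).
  { unfold t. split. apply Rdiv_lt_0_compat; lra.
    apply Rmult_lt_reg_r with (p - x). lra. unfold Rdiv.
    rewrite Rmult_assoc, Rinv_l by lra. lra. }
  assert (Hc : c0 = t * x + (1 - t) * p).
  { unfold t. field. lra. }
  pose proof (phi_convex x p t ltac:(lra) ltac:(unfold p; lra) ltac:(lra)).
  rewrite <- Hc, H0 in H. pose proof phi_p. fold p in H1. nra.
Qed.

Lemma phi_above x : c0 < x < 1 -> phi x < 0.
Proof.
  intros Hx. pose proof c0_lt as Hl. pose proof c0_pos. destruct Hc0 as [_ H0].
  pose proof phi_p as Hp. pose proof phi_1 as H1.
  set (p := 9/10) in *.
  destruct (Rle_dec x p).
  - set (t := (p - x) / (p - c0)).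
    assert (Ht : 0 <= t < 1).
    { unfold t. split. apply Rmult_le_pos. lra. left; apply Rinv_0_lt_compat; lra.
      apply Rmult_lt_reg_r with (p - c0). lra. unfold Rdiv.
      rewrite Rmult_assoc, Rinv_l by lra. lra. }
    assert (Hc : x = t * c0 + (1 - t) * p). { unfold t. field. lra. }
    pose proof (phi_convex c0 p t ltac:(lra) ltac:(unfold p; lra) ltac:(lra)).
    rewrite <- Hc, H0 in H2. nra.
  - assert (Hxp : p < x) by (apply Rnot_le_lt; auto). unfold p in Hxp.
    set (t := (1 - x) / (1 - p)).
    assert (Ht : 0 < t <= 1).
    { unfold t, p. split. apply Rdiv_lt_0_compat; lra.
      apply Rmult_le_reg_r with (1 - 9/10). lra. unfold Rdiv.
      rewrite Rmult_assoc, Rinv_l by lra. lra. }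
    assert (Hc : x = t * p + (1 - t) * 1). { unfold t, p. field. }
    pose proof (phi_convex p 1 t ltac:(unfold p; lra) ltac:(lra) ltac:(lra)).
    rewrite <- Hc in H2. nra.
Qed.

Lemma iter_S (c : R) i : Nat.iter (S i) (g d b) c = g d b (Nat.iter i (g d b) c).
Proof. reflexivity. Qed.

Lemma limit_fixed (u : nat -> R) L : (forall i, u (S i) = g d b (u i)) ->
  Un_cv u L -> 0 <= L -> g d b L = L.
Proof.
  intros Hu Hc HL.
  assert (H1 : Un_cv (fun i => g d b (u i)) (g d b L)).
  { apply continuity_seq; auto. apply g_cont; lra. }
  assert (H2 : Un_cv (fun i => u (S i)) L).
  { intros e He. destruct (Hc e He) as [N HN]. exists N. intros n Hn. apply HN. lia. }
  apply UL_sequence with (fun i => u (S i)); auto.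
  eapply Un_cv_ext; [|exact H1]. intros; simpl; rewrite Hu; reflexivity.
Qed.

End Main.

Lemma lim_bounds (u : nat -> R) a c L : (forall n, a <= u n <= c) -> Un_cv u L -> a <= L <= c.
Proof.
  intros Hb Hc. split.
  - destruct (Rle_dec a L) as [|Hn]; auto. apply Rnot_le_lt in Hn.
    destruct (Hc (a - L) ltac:(lra)) as [N HN]. specialize (HN N (le_n _)).
    specialize (Hb N). unfold Rdist in HN. apply Rabs_def2 in HN. lra.
  - destruct (Rle_dec L c) as [|Hn]; auto. apply Rnot_le_lt in Hn.
    destruct (Hc (L - c) ltac:(lra)) as [N HN]. specialize (HN N (le_n _)).
    specialize (Hb N). unfold Rdist in HN. apply Rabs_def2 in HN. lra.
Qed.

Theorem lemma6p1 (d : nat) (hd : (2 <= d)%nat) (b : R) (hb : 0 < b <= 1) :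
  strictly_increasing_on_0_1 (g d b) /\
  convex_on_0_1 (g d b) /\
  exists c0 : R,
    (0 < c0 < 1 /\ g d b c0 = c0) /\
    (forall c', 0 < c' < 1 -> g d b c' = c' -> c' = c0) /\
    (forall c, 0 <= c < 1 -> Un_cv (fun i => Nat.iter i (g d b) c) c0) /\
    (forall x, 0 <= x <= 1 -> (g d b x > x <-> x < c0)).
Proof.
  assert (hd1 : (1 <= d)%nat) by lia.
  destruct (exists_c0 d hd b hb) as [c0 Hc0].
  pose proof (c0_pos d b hb c0 Hc0) as Hpos.
  pose proof (c0_lt d hd b hb c0 Hc0) as Hlt.
  pose proof (phi_below d hd b hb c0 Hc0) as Hbel.
  pose proof (phi_above d hd b hb c0 Hc0) as Habo.
  pose proof (phi_1 d b hb) as H1.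
  simpl in Hbel, Habo, H1.
  assert (Hfix : g d b c0 = c0) by lra.
  split. { intros x y Hx Hxy Hy. apply g_lt; auto; lra. }
  split. { intros x y t Hx Hy Ht. apply g_convex; lra. }
  exists c0. split. { split; [lra|auto]. }
  split.
  { intros c' Hc' Hf. destruct (Rtotal_order c' c0) as [H|[H|H]]; auto.
    - specialize (Hbel c' ltac:(lra)). lra.
    - specialize (Habo c' ltac:(lra)). lra. }
  split.
  { intros c Hc. set (u := fun i => Nat.iter i (g d b) c).
    assert (Hu : forall i, u (S i) = g d b (u i)) by reflexivity.
    destruct (Rle_dec c c0) as [Hle|Hgt].
    - assert (HP : forall i, c <= u i <= c0).
      { induction i. simpl. lra.
        rewrite Hu. split.
        + assert (u i <= g d b (u i)).
          { destruct (Req_dec (u i) c0) as [E|E]. rewrite E; lra.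
            specialize (Hbel (u i) ltac:(lra)). lra. }
          lra.
        + rewrite <- Hfix. apply g_le; auto; lra. }
      assert (Hg : Un_growing u).
      { intro n. rewrite Hu. specialize (HP n).
        destruct (Req_dec (u n) c0) as [E|E]. rewrite E; lra.
        specialize (Hbel (u n) ltac:(lra)). lra. }
      destruct (growing_cv u Hg) as [L HL].
      { exists c0. intros x [i ->]. apply HP. }
      pose proof (lim_bounds u c c0 L HP HL) as HLb.
      pose proof (limit_fixed d hd b hb u L Hu HL ltac:(lra)) as HfL.
      destruct (Req_dec L c0) as [E|E]. subst L; auto.
      specialize (Hbel L ltac:(lra)). lra.
    - apply Rnot_le_lt in Hgt.
      assert (HP : forall i, c0 <= u i <= c).
      { induction i. simpl. lra.
        rewrite Hu. split.
        + rewrite <- Hfix at 1. apply g_le; auto; lra.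
        + assert (g d b (u i) <= u i).
          { destruct (Req_dec (u i) c0) as [E|E]. rewrite E; lra.
            specialize (Habo (u i) ltac:(lra)). lra. }
          lra. }
      assert (Hg : Un_decreasing u).
      { intro n. rewrite Hu. specialize (HP n).
        destruct (Req_dec (u n) c0) as [E|E]. rewrite E; lra.
        specialize (Habo (u n) ltac:(lra)). lra. }
      destruct (decreasing_cv u Hg) as [L HL].
      { exists (- c0). intros x [i ->]. unfold opp_seq. specialize (HP i). lra. }
      pose proof (lim_bounds u c0 c L HP HL) as HLb.
      pose proof (limit_fixed d hd b hb u L Hu HL ltac:(lra)) as HfL.
      destruct (Req_dec L c0) as [E|E]. subst L; auto.
      specialize (Habo L ltac:(lra)). lra. }
  { intros x Hx. split.
    - intro H. destruct (Rtotal_order x c0) as [H'|[H'|H']]; auto.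
      + subst. lra.
      + destruct (Req_dec x 1) as [E|E]. subst; lra.
        specialize (Habo x ltac:(lra)). lra.
    - intro H. specialize (Hbel x ltac:(lra)). lra. }
Qed.
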